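(* Let $Y$ be a finite connected simple undirected graph with a cycle-edge $e=\{v,w\}$, let $O\in\mathsf{Acyc}(Y)$, and let $\mathbf{c}=c_1c_2\cdots c_m$ be a click-sequence for $O$ that contains every vertex of $\mathcal{I}(O)$ at least once and has $c_1=v$. Then every vertex of $\mathcal{I}(O)$ appears in $\mathbf{c}$ before any vertex of $\mathcal{I}(O)$ appears for the second time.
   Context: $\mathsf{Acyc}(Y)$ is the set of acyclic orientations; $i\leq_O j$ iff there is a directed path from $i$ to $j$ in $O$. $\mathcal{I}(O)=\{a: v\leq_O a\leq_O w\}$ if $v\leq_O w$, and $\mathcal{I}(O)=\varnothing$ otherwise. A click at a vertex $x$ which is a source reverses all edges incident to $x$. A click-sequence for $O$ is a sequence of vertices $c_1,\dots,c_m$ such that for each $i$, $c_i$ is a source of the orientation obtained from $O$ by successively clicking $c_1,\dots,c_{i-1}$; $\mathbf{c}(O)$ denotes the resulting orientation after all $m$ clicks. *)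

(* Defs.v *)
From mathcomp Require Import all_boot.
Set Implicit Arguments. Unset Strict Implicit. Unset Printing Implicit Defensive.

Definition simple_graph (T : finType) (adj : rel T) : Prop :=
  irreflexive adj /\ symmetric adj.

Definition connected_graph (T : finType) (adj : rel T) : Prop :=
  forall x y : T, connect adj x y.

(* {v,w} is a cycle-edge: it lies on some cycle of Y, i.e. there is a
   duplicate-free cyclic sequence p (length >= 3) of vertices, consecutive
   vertices adjacent, in which w follows v. *)
Definition cycle_edge (T : finType) (adj : rel T) (v w : T) : Prop :=
  adj v w /\
  exists p : seq T, [/\ 2 < size p, uniq p, cycle adj p, v \in p & next p v = w].

(* An orientation of Y: o x y means the edge {x,y} is directed x -> y.
   Every edge gets exactly one direction, and only edges are directed. *)
Definition orientation (T : finType) (adj : rel T) (o : rel T) : Prop :=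
  (forall x y, o x y -> adj x y) /\ (forall x y, adj x y -> o x y (+) o y x).

Definition leO (T : finType) (o : rel T) (i j : T) : bool := connect o i j.

Definition acyclic_orientation (T : finType) (adj : rel T) (o : rel T) : Prop :=
  orientation adj o /\ (forall x y, o x y -> ~~ connect o y x).

Definition interval (T : finType) (o : rel T) (v w : T) : {set T} :=
  if leO o v w then [set a | leO o v a && leO o a w] else set0.

Definition is_source (T : finType) (o : rel T) (x : T) : bool :=
  [forall y, ~~ o y x].

Definition click (T : finType) (o : rel T) (x : T) : rel T :=
  fun y z => if (y == x) || (z == x) then o z y else o y z.

Fixpoint is_click_seq (T : finType) (o : rel T) (c : seq T) : bool :=
  if c is x :: cs then is_source o x && is_click_seq (click o x) cs else true.

(* Main.v *)
Require Import Defs.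
From mathcomp Require Import all_boot.
From mathcomp Require Import zify.
Set Implicit Arguments.

Lemma click_cat (T : finType) (s1 s2 : seq T) (o : rel T) :
  is_click_seq o (s1 ++ s2) = is_click_seq o s1 && is_click_seq (foldl (@click T) o s1) s2.
Proof.
elim: s1 o => [|z s IH] o //=.
by rewrite IH andbA.
Qed.

Lemma inv (T : finType) (s : seq T) : forall (o : rel T) (x y : T),
  x != y -> o x y -> ~~ o y x -> is_click_seq o s ->
  [/\ count_mem y s <= count_mem x s <= (count_mem y s).+1,
      foldl (@click T) o s x y = (count_mem x s == count_mem y s) &
      foldl (@click T) o s y x = (count_mem x s != count_mem y s)].
Proof.
elim: s => [|z s IH] o x y nxy oxy noyx /=.
  by move=> _; rewrite leqnSn oxy (negbTE noyx).
move=> /andP [src cs].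
have [zx|nzx] := eqVneq z x.
  subst z.
  have c1 : click o x y x by rewrite /click eqxx orbT.
  have c2 : ~~ click o x x y by rewrite /click eqxx /= (negbTE noyx).
  have nyx : y != x by rewrite eq_sym.
  have [h1 h2 h3] := IH (click o x) y x nyx c1 c2 cs.
  move: h1 h2 h3.
  rewrite (negbTE nxy) /=.
  set a := count_mem x s; set b := count_mem y s.
  move=> /andP [h1 h1'] -> ->.
  rewrite add1n add0n.
  have [->|->] : b = a \/ b = a.+1 by lia.
    have h : (a.+1 == a) = false by lia.
    by rewrite eqxx h leqnn leqnSn.
  have h : (a.+1 == a) = false by lia.
  by rewrite eqxx h leqnn leqnSn.
have [zy|nzy] := eqVneq z y.
  subst z. by move/forallP: src => /(_ x); rewrite oxy.
have c1 : click o z x y by rewrite /click (eq_sym x z) (eq_sym y z) (negbTE nzx) (negbTE nzy).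
have c2 : ~~ click o z y x by rewrite /click (eq_sym x z) (eq_sym y z) (negbTE nzx) (negbTE nzy).
have [h1 h2 h3] := IH (click o z) x y nxy c1 c2 cs.
by rewrite /= !add0n.
Qed.

Arguments inv {T s o x y}.

Section Main.
Variables (T : finType) (adj : rel T) (o : rel T).
Hypothesis sg : simple_graph adj.
Hypothesis ac : acyclic_orientation adj o.

Lemma edge_ok (x y : T) : o x y -> x != y /\ ~~ o y x.
Proof.
move=> oxy; case: ac => [[h1 h2] _]; have axy := h1 _ _ oxy.
split; first by apply/eqP => exy; subst; case: sg => irr _; rewrite irr in axy.
by have := h2 _ _ axy; rewrite oxy.
Qed.

Lemma mono (s : seq T) : is_click_seq o s -> forall x y, connect o x y ->
  count_mem y s <= count_mem x s.
Proof.
move=> cs x y /connectP [p pth ->]; elim: p x pth => [|z p IH] x //= /andP [oxz pth].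
have [n1 n2] := edge_ok oxz.
have [/andP [h _] _ _] := inv n1 oxz n2 cs.
exact: leq_trans (IH _ pth) h.
Qed.

Lemma pred_ex v b : connect o v b -> v != b -> exists x, connect o v x /\ o x b.
Proof.
move=> /connectP [p pth ->]; case/lastP: p pth => [|p x] //=; first by rewrite eqxx.
rewrite rcons_path last_rcons => /andP [pth ox] _.
by exists (last v p); split => //; apply/connectP; exists p.
Qed.
End Main.
Arguments edge_ok {T adj o} sg ac {x y}.
Arguments mono {T adj o} sg ac {s} cs {x y}.
Arguments pred_ex {T o v b}.

Theorem proposition7 (T : finType) (adj : rel T) (v w : T) (o : rel T)
    (c : seq T) :
  simple_graph adj -> connected_graph adj -> cycle_edge adj v w ->
  acyclic_orientation adj o ->
  is_click_seq o c ->
  {subset interval o v w <= c} ->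
  head w c = v -> c != [::] ->
  forall j : nat, j < size c ->
    nth v c j \in interval o v w -> nth v c j \in take j c ->
    forall a, a \in interval o v w -> a \in take j c.
Proof.
move=> sg _ [avw _] ac cs _ _ _ j jlt.
set b := nth v c j => bI bs a aI.
have vw : leO o v w by move: bI; rewrite /interval; case: (leO o v w); rewrite ?inE.
move: bI aI; rewrite /interval vw !inE => /andP [vb bw] /andP [va aw].
set s := take j c.
have cdec : c = s ++ b :: drop j.+1 c by rewrite /s /b -drop_nth // cat_take_drop.
move: cs; rewrite cdec click_cat => /andP [css /= /andP [src _]].
set o' := foldl (@click T) o s in src.
have ovw : o v w.
  case: ac => [[h1 h2] h3]; have := h2 _ _ avw.
  case ovw: (o v w) => //= owv; have := h3 _ _ owv; by rewrite /leO in vw; rewrite vw.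
have [nvw nwv] := edge_ok sg ac ovw.
have [/andP [hvw1 hvw2] _ hwv] := inv nvw ovw nwv css.
have nw : 0 < count_mem w s.
  have [ebv|nbv] := eqVneq v b.
    have : ~~ o' w v by move/forallP: src => /(_ w); rewrite ebv.
    rewrite /o' hwv negbK => /eqP e.
    by rewrite -e ebv -has_count has_pred1.
  have [x [vx oxb]] := pred_ex vb nbv.
  have [nxb nbx] := edge_ok sg ac oxb.
  have [/andP [hxb1 hxb2] hxb _] := inv nxb oxb nbx css.
  have : ~~ o' x b by move/forallP: src => /(_ x).
  rewrite /o' hxb => ne.
  have m := mono sg ac css vx.
  have nb : 0 < count_mem b s by rewrite -has_count has_pred1.
  move: ne hxb1 hxb2 m hvw2 nb.
  move: (count_mem x s) (count_mem b s) (count_mem v s) (count_mem w s) => nx nb' nv nw'.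
  clear; move=> ne h1 h2 h3 h4 h5.
  lia.
have := mono sg ac css aw.
rewrite -has_pred1 has_count => h; apply: leq_trans nw h.
Qed.
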